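(* Let $\sigma$ be a set of atomic propositions, let $\bar P$ be a finite sequence of proposition symbols disjoint from $\sigma$ with underlying set $P$, and let $L\subseteq L_\mu[\sigma\cup P]$. Let $(M_1,M_2)$ be a weak directed $\sigma$-separation of a $\sigma$-structure $M$ with interface $\bar X=(x_1,\dots,x_k)$, where $|\bar P|\ge k$. Then there exist a $\sigma$-structure $M'$, a directed $\sigma$-separation $(M_1',M_2')$ of $M'$ with the same interface $\bar X$, and isomorphisms $\pi_1:M_1\to M_1'$ and $\pi_2:M_2\to M_2'$ that are the identity on $\{x_1,\dots,x_k\}$, such that $\mathrm{tp}_{L,\bar P}(M,v,\bar X)=\mathrm{tp}_{L,\bar P}(M',\pi_i(v),\bar X)$ for all $i\in\{1,2\}$ and all $v\in V(M_i)$.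
   Context: $L_\mu[\tau]$ is the modal $\mu$-calculus over propositions $\tau$: formulas from $\top,\bot$, $R,\neg R$, fixpoint variables, $\wedge,\vee,\Diamond,\Box,\mu,\nu$. They are evaluated on structures with edge relation, with $\Diamond/\Box$ ranging over successors. **Marked structures.** $\partial_{\bar P}(M,\bar X)$ expands $M$ so that $P_i$ holds exactly at $x_i$ for $i\le|\bar X|$, and nowhere for larger $i$. **Closures and types.** $\mathrm{CL}(L)$ is the union of the Fischer–Ladner closures of the formulas in $L$. $\mathrm{PT}_P(\varphi)$ is the set of formulas obtained by replacing each occurrence $\Diamond\chi$ by $(\bigvee_{R\in Q}R)\vee\Diamond\chi$ and each occurrence $\Box\chi$ by $(\bigwedge_{R\in Q}\neg R)\wedge\Box\chi$, for freely chosen sets $Q\subseteq P$ (chosen per occurrence). $\mathrm{CL}_P(L)=\bigcup_{\varphi\in\mathrm{CL}(L)}\mathrm{PT}_P(\varphi)$, and $\mathrm{tp}_{L,\bar P}(M,v,\bar X)=\{\varphi\in\mathrm{CL}_P(L):\partial_{\bar P}(M,\bar X),v\models\varphi\}$. **Weak directed separation.** A pair $(M_1,M_2)$ of induced substructures of $M$ is a weak directed $\sigma$-separation with interface $\bar X$ if: - $V(M)=V(M_1)\cup V(M_2)$; - $X=\{x_1,\dots,x_k\}\subseteq V(M_1)\cap V(M_2)$; - there are no edges from $V(M_2)\setminus(V(M_1)\cap V(M_2))$ to $V(M_1)\setminus(V(M_1)\cap V(M_2))$; - there are no edges from $(V(M_1)\cap V(M_2))\setminus X$ to $V(M_1)\setminus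 V(M_2)$. **Directed separation.** It is a (non-weak) directed separation if moreover $X=V(M_1)\cap V(M_2)$ and there are no edges from $V(M_2)\setminus X$ to $V(M_1)\setminus X$. *)

(* Defs.v *)
From mathcomp Require Import all_boot.
From Stdlib Require List.

Set Implicit Arguments.
Unset Strict Implicit.
Unset Printing Implicit Defensive.

(* Formulas are in negation normal form; fixpoint variables are named by nat. *)
Inductive form (A : Type) : Type :=
| FTop : form A
| FBot : form A
| FAt : A -> form A
| FNAt : A -> form A
| FVar : nat -> form A
| FAnd : form A -> form A -> form A
| FOr : form A -> form A -> form A
| FDia : form A -> form A
| FBox : form A -> form A
| FMu : nat -> form A -> form A
| FNu : nat -> form A -> form A.

Arguments FTop {A}. Arguments FBot {A}. Arguments FVar {A} _.

(* all atoms occurring in the formula satisfy p :  phi \in L_mu[p] *)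
Fixpoint atoms_in (A : Type) (p : A -> Prop) (f : form A) : Prop :=
  match f with
  | FTop | FBot | FVar _ => True
  | FAt R | FNAt R => p R
  | FAnd f1 f2 | FOr f1 f2 => atoms_in p f1 /\ atoms_in p f2
  | FDia g | FBox g | FMu _ g | FNu _ g => atoms_in p g
  end.

Record sstruct (A : Type) := SStruct {
  vert : Type;
  edge : vert -> vert -> Prop;
  lab : A -> vert -> Prop }.

Arguments vert {A} s.
Arguments edge {A} s _ _.
Arguments lab {A} s _ _.
Arguments SStruct {A} vert edge lab.

Definition upd {V : Type} (e : nat -> V -> Prop) (x : nat) (S : V -> Prop) :
  nat -> V -> Prop := fun y => if Nat.eqb y x then S else e y.

(* Semantics; mu = least fixpoint (intersection of prefixed points),
   nu = greatest fixpoint (union of postfixed points). *)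
Fixpoint sem (A : Type) (M : sstruct A) (e : nat -> vert M -> Prop) (f : form A)
  : vert M -> Prop :=
  match f with
  | FTop => fun _ => True
  | FBot => fun _ => False
  | FAt R => fun v => lab M R v
  | FNAt R => fun v => ~ lab M R v
  | FVar x => fun v => e x v
  | FAnd f1 f2 => fun v => sem e f1 v /\ sem e f2 v
  | FOr f1 f2 => fun v => sem e f1 v \/ sem e f2 v
  | FDia g => fun v => exists w, edge M v w /\ sem e g w
  | FBox g => fun v => forall w, edge M v w -> sem e g w
  | FMu x g => fun v => forall S : vert M -> Prop,
        (forall w, sem (upd e x S) g w -> S w) -> S v
  | FNu x g => fun v => exists S : vert M -> Prop,
        (forall w, S w -> sem (upd e x S) g w) /\ S v
  end.

Arguments sem {A} M e f _.

(* M, v |= phi  (free fixpoint variables are interpreted as the empty set) *)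
Definition sat (A : Type) (M : sstruct A) (f : form A) (v : vert M) : Prop :=
  sem M (fun _ _ => False) f v.

(* partial_{Pbar}(M, X): P_i holds exactly at x_i for i < |X|, nowhere for
   i >= |X|; all other atoms keep their interpretation in M. *)
Definition mark (A : Type) (M : sstruct A) (Pbar : seq A) (X : seq (vert M))
  : sstruct A :=
  @SStruct A (vert M) (edge M)
    (fun R v => (~ List.In R Pbar /\ lab M R v) \/
       exists i, i < size X /\ i < size Pbar /\
                 nth R Pbar i = R /\ nth v X i = v).

Arguments sat {A} M f v.
Arguments mark {A} M Pbar X.

Fixpoint subst (A : Type) (x : nat) (s : form A) (f : form A) : form A :=
  match f with
  | FVar y => if Nat.eqb y x then s else FVar y
  | FAnd f1 f2 => FAnd (subst x s f1) (subst x s f2)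
  | FOr f1 f2 => FOr (subst x s f1) (subst x s f2)
  | FDia g => FDia (subst x s g)
  | FBox g => FBox (subst x s g)
  | FMu y g => if Nat.eqb y x then FMu y g else FMu y (subst x s g)
  | FNu y g => if Nat.eqb y x then FNu y g else FNu y (subst x s g)
  | g => g
  end.

Inductive FL (A : Type) (phi : form A) : form A -> Prop :=
| FL_self : FL phi phi
| FL_andl f1 f2 : FL phi (FAnd f1 f2) -> FL phi f1
| FL_andr f1 f2 : FL phi (FAnd f1 f2) -> FL phi f2
| FL_orl f1 f2 : FL phi (FOr f1 f2) -> FL phi f1
| FL_orr f1 f2 : FL phi (FOr f1 f2) -> FL phi f2
| FL_dia g : FL phi (FDia g) -> FL phi g
| FL_box g : FL phi (FBox g) -> FL phi g
| FL_mu x g : FL phi (FMu x g) -> FL phi (subst x (FMu x g) g)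
| FL_nu x g : FL phi (FNu x g) -> FL phi (subst x (FNu x g) g).

Definition CL (A : Type) (L : form A -> Prop) (psi : form A) : Prop :=
  exists phi, L phi /\ FL phi psi.

Definition bigOr_with (A : Type) (Q : seq A) (base : form A) : form A :=
  foldr (fun R acc => FOr (FAt R) acc) base Q.
Definition bigAndN_with (A : Type) (Q : seq A) (base : form A) : form A :=
  foldr (fun R acc => FAnd (FNAt R) acc) base Q.

Inductive PT (A : Type) (Pbar : seq A) : form A -> form A -> Prop :=
| PT_top : PT Pbar FTop FTop
| PT_bot : PT Pbar FBot FBot
| PT_at R : PT Pbar (FAt R) (FAt R)
| PT_nat R : PT Pbar (FNAt R) (FNAt R)
| PT_var x : PT Pbar (FVar x) (FVar x)
| PT_and f1 f2 g1 g2 : PT Pbar f1 g1 -> PT Pbar f2 g2 ->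
    PT Pbar (FAnd f1 f2) (FAnd g1 g2)
| PT_or f1 f2 g1 g2 : PT Pbar f1 g1 -> PT Pbar f2 g2 ->
    PT Pbar (FOr f1 f2) (FOr g1 g2)
| PT_dia f g (Q : seq A) : PT Pbar f g -> (forall R, List.In R Q -> List.In R Pbar) ->
    PT Pbar (FDia f) (bigOr_with Q (FDia g))
| PT_box f g (Q : seq A) : PT Pbar f g -> (forall R, List.In R Q -> List.In R Pbar) ->
    PT Pbar (FBox f) (bigAndN_with Q (FBox g))
| PT_mu x f g : PT Pbar f g -> PT Pbar (FMu x f) (FMu x g)
| PT_nu x f g : PT Pbar f g -> PT Pbar (FNu x f) (FNu x g).

Definition CLP (A : Type) (Pbar : seq A) (L : form A -> Prop) (psi : form A) : Prop :=
  exists phi, CL L phi /\ PT Pbar phi psi.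

Definition tp (A : Type) (L : form A -> Prop) (Pbar : seq A)
  (M : sstruct A) (v : vert M) (X : seq (vert M)) (psi : form A) : Prop :=
  CLP Pbar L psi /\ sat (mark M Pbar X) psi v.

(* (M[S1], M[S2]) is a weak directed separation of M with interface X *)
Definition weak_dsep (A : Type) (M : sstruct A) (S1 S2 : vert M -> Prop)
  (X : seq (vert M)) : Prop :=
  [/\ (forall v, S1 v \/ S2 v),
      (forall x, List.In x X -> S1 x /\ S2 x),
      (forall u w, edge M u w -> S2 u -> ~ S1 u -> S1 w -> ~ S2 w -> False) &
      (forall u w, edge M u w -> S1 u -> S2 u -> ~ List.In u X ->
                   S1 w -> ~ S2 w -> False)].

Definition dsep (A : Type) (M : sstruct A) (S1 S2 : vert M -> Prop)
  (X : seq (vert M)) : Prop :=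
  [/\ @weak_dsep A M S1 S2 X,
      (forall v, S1 v -> S2 v -> List.In v X) &
      (forall u w, edge M u w -> S2 u -> ~ List.In u X ->
                   S1 w -> ~ List.In w X -> False)].

(* f restricted to S is a sigma-isomorphism of induced substructures
   M[S] -> M'[S'] *)
Definition iso_on (A : Type) (sigma : A -> Prop) (M M' : sstruct A)
  (S : vert M -> Prop) (S' : vert M' -> Prop) (f : vert M -> vert M') : Prop :=
  [/\ (forall v, S v -> S' (f v)),
      (forall u v, S u -> S v -> f u = f v -> u = v),
      (forall v', S' v' -> exists v, S v /\ f v = v'),
      (forall u v, S u -> S v -> (edge M u v <-> edge M' (f u) (f v))) &
      (forall R u, sigma R -> S u -> (lab M R u <-> lab M' R (f u)))].

Arguments tp {A} L Pbar M v X psi.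
Arguments weak_dsep {A} M S1 S2 X.
Arguments dsep {A} M S1 S2 X.
Arguments iso_on {A} sigma M M' S S' f.

(* Main.v *)
Require Import Defs.
From mathcomp Require Import all_boot.
From Stdlib Require List.
From Stdlib Require Import Classical ClassicalEpsilon ProofIrrelevance.

Lemma sem_mono (A : Type) (N : sstruct A) (f : form A) :
  forall e1 e2 : nat -> vert N -> Prop, (forall y v, e1 y v -> e2 y v) ->
  forall v, sem N e1 f v -> sem N e2 f v.
Proof.
  induction f as [| |R|R|y|f1 IH1 f2 IH2|f1 IH1 f2 IH2|g IH|g IH|x g IH|x g IH];
    intros e1 e2 He v; simpl; auto.
  - intros [H1 H2]; split; eauto.
  - intros [H1|H2]; [left|right]; eauto.
  - intros [w [Hw Hs]]; exists w; split; eauto.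
  - intros H w Hw; eauto.
  - intros H S HS. apply H. intros w Hw. apply HS.
    apply (IH (upd e1 x S)); auto.
    intros y u; unfold upd; destruct (Nat.eqb y x); auto.
  - intros [S [HS Hv]]. exists S; split; auto. intros w Hw.
    apply (IH (upd e1 x S)); auto.
    intros y u; unfold upd; destruct (Nat.eqb y x); auto.
Qed.

Lemma sem_hom (A : Type) (N' N : sstruct A) (h : vert N' -> vert N)
  (Hf : forall a b, edge N' a b -> edge N (h a) (h b))
  (Hb : forall a w, edge N (h a) w -> exists b, edge N' a b /\ h b = w)
  (Hl : forall R a, lab N' R a <-> lab N R (h a)) (f : form A) :
  forall e e', (forall y a, e' y a <-> e y (h a)) ->
  forall a, sem N' e' f a <-> sem N e f (h a).
Proof.
  induction f as [| |R|R|y|f1 IH1 f2 IH2|f1 IH1 f2 IH2|g IH|g IH|x g IH|x g IH];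
    intros e e' He a; simpl.
  - tauto.
  - tauto.
  - apply Hl.
  - rewrite Hl; tauto.
  - apply He.
  - rewrite (IH1 e e' He) (IH2 e e' He); tauto.
  - rewrite (IH1 e e' He) (IH2 e e' He); tauto.
  - split.
    + intros [b [Hab Hs]]. exists (h b); split; auto. apply (IH e e' He); auto.
    + intros [w [Hw Hs]]. destruct (Hb a w Hw) as [b [Hab Hbw]]. subst w.
      exists b; split; auto. apply (IH e e' He); auto.
  - split.
    + intros H w Hw. destruct (Hb a w Hw) as [b [Hab Hbw]]. subst w.
      apply (IH e e' He); auto.
    + intros H b Hab. apply (IH e e' He); auto.
  - split.
    + intros H S HS. apply (H (fun b => S (h b))). intros a' Ha'.
      apply HS. apply (IH (upd e x S) (upd e' x (fun b => S (h b)))); auto.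
      intros y b; unfold upd; destruct (Nat.eqb y x); auto. tauto.
    + intros H S' HS'.
      set S := fun w => forall a', h a' = w -> S' a'.
      assert (HSa : S (h a)). { apply H. intros w Hw a' Ha'. subst w.
        apply HS'.
        apply (@sem_mono _ _ _ (upd e' x (fun b => S (h b)))).
        { intros y b; unfold upd; destruct (Nat.eqb y x); auto. }
        apply (IH (upd e x S)); auto.
        intros y b; unfold upd; destruct (Nat.eqb y x); auto. tauto. }
      apply HSa; reflexivity.
  - split.
    + intros [S' [HS' Ha]].
      exists (fun w => exists a', h a' = w /\ S' a'). split; [|eauto].
      intros w [a' [Hw Ha']]. subst w.
      apply (IH (upd e x (fun w => exists a', h a' = w /\ S' a')) (upd e' x (fun b => exists a', h a' = h b /\ S' a'))).
      { intros y b; unfold upd; destruct (Nat.eqb y x); [tauto | apply He]. }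
      apply (@sem_mono _ _ _ (upd e' x S')).
      { intros y b; unfold upd; destruct (Nat.eqb y x); eauto. }
      auto.
    + intros [S [HS Ha]]. exists (fun b => S (h b)). split; auto.
      intros b Hb'. apply (IH (upd e x S)).
      { intros y c; unfold upd; destruct (Nat.eqb y x); [tauto | apply He]. }
      auto.
Qed.
Lemma nth_default_irr (T : Type) (s : seq T) i (d1 d2 : T) : i < size s -> nth d1 s i = nth d2 s i.
Proof. revert i; induction s as [|x s IH]; intros [|i]; simpl; auto; try discriminate. Qed.

Lemma nth_In_seq (T : Type) (s : seq T) i (d : T) : i < size s -> List.In (nth d s i) s.
Proof. revert i; induction s as [|x s IH]; intros [|i]; simpl; auto; try discriminate. Qed.


Section Constr.
Variables (A : Type) (M : sstruct A) (S1 S2 : vert M -> Prop) (X : seq (vert M)).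

Definition Yp (v : vert M) : Prop := S1 v /\ S2 v /\ ~ List.In v X.
Definition V' : Type := (vert M + {v : vert M | Yp v})%type.
Definition hh (a : V') : vert M := match a with inl u => u | inr y => proj1_sig y end.
Definition E' (a b : V') : Prop :=
  match a, b with
  | inl u, inl w => edge M u w /\ ~ (S2 u /\ ~ S1 u /\ Yp w)
  | inl u, inr w => edge M u (proj1_sig w) /\ ((S2 u /\ ~ S1 u) \/ List.In u X)
  | inr y, inl w => edge M (proj1_sig y) w /\ ~ Yp w
  | inr y, inr w => edge M (proj1_sig y) (proj1_sig w)
  end.
Definition M' : sstruct A := SStruct V' E' (fun R a => lab M R (hh a)).
Definition S1' (a : V') : Prop := match a with inl v => S1 v | inr _ => False end.
Definition S2' (a : V') : Prop := match a with inl v => S2 v /\ ~ Yp v | inr _ => True end.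
Definition pi2 (v : vert M) : V' :=
  match excluded_middle_informative (Yp v) with
  | left p => inr (exist _ v p)
  | right _ => inl v
  end.

Lemma hh_pi2 v : hh (pi2 v) = v.
Proof. unfold pi2; destruct (excluded_middle_informative (Yp v)); reflexivity. Qed.

Lemma E'_forth a b : E' a b -> edge M (hh a) (hh b).
Proof. destruct a, b; simpl; tauto. Qed.

Lemma E'_back a w : edge M (hh a) w -> exists b, E' a b /\ hh b = w.
Proof.
  destruct a as [u|[y py]]; simpl; intros H.
  - destruct (classic (S2 u /\ ~ S1 u /\ Yp w)) as [C|C].
    + exists (inr (exist _ w (proj2 (proj2 C)))); simpl; split; auto. split; auto. left; tauto.
    + exists (inl w); simpl; auto.
  - destruct (classic (Yp w)) as [C|C].
    + exists (inr (exist _ w C)); simpl; auto.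
    + exists (inl w); simpl; auto.
Qed.


Lemma mark_lab Pbar (R : A) (a : V') :
  lab (mark M' Pbar (map inl X)) R a <-> lab (mark M Pbar X) R (hh a).
Proof.
  simpl. rewrite size_map. split; (intros [H|[i [H1 [H2 [H3 H4]]]]]; [left; exact H|right; exists i; repeat split; auto]).
  - destruct a as [u|[y py]]; simpl.
    + rewrite (nth_map u) in H4; auto. injection H4; auto.
    + rewrite (nth_map y) in H4; auto. discriminate.
  - destruct a as [u|[y py]]; simpl in *.
    + rewrite (nth_map u); auto. rewrite H4; auto.
    + exfalso. destruct py as [_ [_ py]]. apply py. rewrite <- H4. apply nth_In_seq; auto.
Qed.

Lemma in_map_inl (u : vert M) : List.In (inl u : V') (map inl X) <-> List.In u X.
Proof.
  induction X as [|x s IH]; simpl; [tauto|].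
  split; intros [H|H]; auto.
  - left; injection H; auto.
  - right; apply IH; auto.
  - left; subst; auto.
  - right; apply IH; auto.
Qed.

Lemma map_pi2 : forall s, (forall x, List.In x s -> ~ Yp x) -> map pi2 s = map inl s.
Proof.
  intros s; induction s as [|x s IH]; intros H; simpl; auto.
  rewrite IH; [|intros; apply H; simpl; auto].
  unfold pi2; destruct (excluded_middle_informative (Yp x)) as [p|p]; auto.
  exfalso; apply (H x); simpl; auto.
Qed.

Lemma dsep_M' : weak_dsep M S1 S2 X -> dsep M' S1' S2' (map inl X).
Proof.
  intros [Wa Wb Wc Wd]. unfold Yp in *.
  assert (Hint : forall a, S1' a -> S2' a -> List.In a (map inl X)).
  { intros [u|y]; simpl; unfold Yp in *; try tauto. intros H1 [H2 H3]. apply in_map_inl.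
    apply NNPP; intro C; apply H3; tauto. }
  split; [split| |].
  - intros [u|y]; simpl; unfold Yp in *; auto. destruct (Wa u) as [H|H]; auto.
    destruct (classic (S1 u /\ S2 u /\ ~ List.In u X)); [left|right]; tauto.
  - intros a Ha. assert (Ha' := Ha). apply List.in_map_iff in Ha' as [x [Hx Hin]]. subst a.
    simpl; unfold Yp. destruct (Wb x Hin); tauto.
  - intros [u|[y py]] [w|[w pw]]; simpl; unfold Yp in *; try tauto.
    + intros [He Hn] H2 H1 Hw1 Hw2.
      destruct (classic (S2 w)) as [C|C].
      * apply Hn; split; [tauto|split; [tauto|]]. apply NNPP; intro; apply Hw2; split; auto.
      * eapply Wc; eauto. tauto.
    + intros [He Hn] _ _ Hw1 Hw2. destruct py as [p1 [p2 p3]].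
      eapply Wd; eauto.
  - intros a b Hab H1 H2 Hn. exfalso; apply Hn, Hint; auto.
  - exact Hint.
  - intros [u|[y py]] [w|[w pw]]; simpl; unfold Yp in *; try tauto.
    + intros [He Hn] [H2 HY] Hu Hw1 Hw.
      rewrite in_map_inl in Hu. rewrite in_map_inl in Hw.
      assert (~ S1 u) by (intro; apply HY; tauto).
      eapply Wc; eauto. intro; apply Hn; tauto.
    + intros [He Hn] _ _ Hw1 Hw. rewrite in_map_inl in Hw. destruct py as [p1 [p2 p3]].
      eapply Wd; eauto.
Qed.

Lemma iso1 (sigma : A -> Prop) : iso_on sigma M M' S1 S1' inl.
Proof.
  split; simpl; auto.
  - intros u v _ _ H; injection H; auto.
  - intros [v|y] H; simpl in H; [exists v; auto|tauto].
  - intros u v Hu Hv; split; [intros H; split; auto; tauto|tauto].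
  - tauto.
Qed.

Lemma iso2 (sigma : A -> Prop) : iso_on sigma M M' S2 S2' pi2.
Proof.
  split.
  - intros v Hv; unfold pi2; destruct (excluded_middle_informative (Yp v)); simpl; auto.
  - intros u v _ _ H. rewrite <- (hh_pi2 u), <- (hh_pi2 v), H; auto.
  - intros [v|[y py]] H; simpl in H.
    + exists v; split; [tauto|]. unfold pi2; destruct (excluded_middle_informative (Yp v)); tauto.
    + exists y; split; [destruct py as [_ [p _]]; auto|].
      unfold pi2; destruct (excluded_middle_informative (Yp y)) as [p|p]; [|tauto].
      rewrite (proof_irrelevance _ p py); auto.
  - intros u v Hu Hv. unfold pi2.
    destruct (excluded_middle_informative (Yp u)) as [pu|pu];
    destruct (excluded_middle_informative (Yp v)) as [pv|pv]; simpl; try tauto.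
    split; [intros H; split; auto|tauto].
    destruct (classic (S1 u)) as [C|C]; [right|left; tauto].
    apply NNPP; intro; apply pu; unfold Yp; tauto.
  - intros R u _ _. simpl. rewrite hh_pi2. tauto.
Qed.

End Constr.

Theorem theorem4p2 (A : Type) (sigma : A -> Prop) (Pbar : seq A)
  (L : form A -> Prop) (M : sstruct A) (S1 S2 : vert M -> Prop)
  (X : seq (vert M)) :
  (forall R, List.In R Pbar -> ~ sigma R) ->
  (forall phi, L phi -> atoms_in (fun R => sigma R \/ List.In R Pbar) phi) ->
  weak_dsep M S1 S2 X ->
  size X <= size Pbar ->
  exists (M' : sstruct A) (S1' S2' : vert M' -> Prop) (X' : seq (vert M'))
         (pi1 pi2 : vert M -> vert M'),
    [/\ X' = map pi1 X /\ X' = map pi2 X,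
        dsep M' S1' S2' X',
        iso_on sigma M M' S1 S1' pi1 /\ iso_on sigma M M' S2 S2' pi2,
        (forall v, S1 v -> forall psi, tp L Pbar M v X psi <-> tp L Pbar M' (pi1 v) X' psi) &
        (forall v, S2 v -> forall psi, tp L Pbar M v X psi <-> tp L Pbar M' (pi2 v) X' psi)].
Proof.
  intros _ _ W _.
  assert (Hsat : forall psi (a : V' A M S1 S2 X),
    sat (mark (M' A M S1 S2 X) Pbar (map inl X)) psi a <-> sat (mark M Pbar X) psi (hh A M S1 S2 X a)).
  { intros psi a. unfold sat. apply (@sem_hom A (mark (M' A M S1 S2 X) Pbar (map inl X)) (mark M Pbar X) (hh A M S1 S2 X)).
    - intros a1 b1 H; exact (E'_forth A M S1 S2 X a1 b1 H).
    - intros a1 w H; exact (E'_back A M S1 S2 X a1 w H).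
    - intros R b; exact (mark_lab A M S1 S2 X Pbar R b).
    - tauto. }
  exists (M' A M S1 S2 X), (S1' A M S1 S2 X), (S2' A M S1 S2 X), (map inl X), inl, (pi2 A M S1 S2 X).
  split.
  - split; auto. symmetry; apply map_pi2. intros x Hx [_ [_ H]]; auto.
  - apply dsep_M'; auto.
  - split; [apply iso1|apply iso2].
  - intros v _ psi. unfold tp. rewrite Hsat. simpl. tauto.
  - intros v _ psi. unfold tp. rewrite Hsat (hh_pi2 A M S1 S2 X). tauto.
Qed.
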